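(* Let $(X,E,\ell)$ be a uniformly connected edge-labelled directed graph with label alphabet $\Sigma$, equipped with transition probabilities $p(e)\ge\alpha>0$ for all $e\in E$ (for a constant $\alpha$) satisfying $\sum_{e:\,e^-=x}p(e)\le1$ for every $x$. Let $F\subset\Sigma^+$ be a finite, non-empty set which is relatively dense in $(X,E,\ell)$. Then $$\sup_{x,y\in X}\rho_{x,y}(P_F)<\rho(P)\quad\text{strictly.}$$
   Context: $\Sigma$ is a finite alphabet, $\Sigma^+$ the non-empty finite words. Edges $e=(x,a,y)$ have initial vertex $e^-=x$, terminal vertex $e^+=y$ and label $a\in\Sigma$ (two edges with the same endpoints have distinct labels); paths $\pi=e_1\cdots e_n$ (with $e_i^+=e_{i+1}^-$) have labels $\ell(e_1)\cdots\ell(e_n)$. Uniformly connected: for all $x,y$ there is a path from $x$ to $y$, and there is $K$ such that for each edge from $x$ to $y$ there is a path from $y$ to $x$ of length at most $K$. $d^+(x,y)$ is the minimal length of a path from $x$ to $y$; $F$ is relatively dense if there is $D$ such that for each $x$ there are $y$ and $w\in F$ with $d^+(x,y)\le D$ and a path starting at $y$ with label $w$. $P=(p(x,y))$ with $p(x,y)=\sum_{a:(x,a,y)\in E}p(x,a,y)$, $p^{(n)}(x,y)$ its $n$-th matrix power entries, and $\rho(P)=\limsup_n p^{(n)}(x,y)^{1/n}$ (independent of $x,y$). With $\mathbb P(\pi)=\prod_ip(e_i)$, $p_F^{(n)}(x,y)=\sum\mathbb P(\pi)$ over paths $\pi$ of length $n$ from $x$ to $y$ whose label contains no element of $F$ as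 a factor, and $\rho_{x,y}(P_F)=\limsup_n p_F^{(n)}(x,y)^{1/n}$. *)

(* Defs.v *)
From HB Require Import structures.
From mathcomp Require Import all_boot all_order all_algebra.
From mathcomp Require Import all_classical all_reals all_analysis.
Set Implicit Arguments. Unset Strict Implicit. Unset Printing Implicit Defensive.
Import Order.TTheory GRing.Theory Num.Theory.
Local Open Scope classical_set_scope.
Local Open Scope ring_scope.

(* Edges are triples (x, a, y) : X * Sigma * X ; the edge set E is a set of
   such triples (so two edges with the same endpoints have distinct labels). *)
Definition edge (X : Type) (Sigma : Type) := (X * Sigma * X)%type.
Definition einit X Sigma (e : edge X Sigma) : X := e.1.1.
Definition elabel X Sigma (e : edge X Sigma) : Sigma := e.1.2.
Definition eterm X Sigma (e : edge X Sigma) : X := e.2.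

Fixpoint walk (X Sigma : Type) (E : set (edge X Sigma)) (x y : X)
  (s : seq (edge X Sigma)) : Prop :=
  match s with
  | [::] => x = y
  | e :: s' => E e /\ einit e = x /\ walk E (eterm e) y s'
  end.

Definition plabel (X Sigma : Type) (s : seq (edge X Sigma)) : seq Sigma :=
  map (@elabel X Sigma) s.

Definition uniformly_connected (X Sigma : Type) (E : set (edge X Sigma)) : Prop :=
  (forall x y : X, exists s, walk E x y s) /\
  (exists K : nat, forall e, E e ->
      exists s, walk E (eterm e) (einit e) s /\ (size s <= K)%N).

Definition rel_dense (X : Type) (Sigma : eqType) (E : set (edge X Sigma))
  (F : seq (seq Sigma)) : Prop :=
  exists D : nat, forall x : X, exists (y : X) (w : seq Sigma),
    w \in F /\ (exists s, walk E x y s /\ (size s <= D)%N) /\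
    (exists (z : X) s, walk E y z s /\ plabel s = w).

Definition avoids (X : Type) (Sigma : eqType) (F : seq (seq Sigma))
  (s : seq (edge X Sigma)) : bool :=
  ~~ has (fun w => infix w (plabel s)) F.

Definition pathP (R : realType) (X Sigma : Type) (p : edge X Sigma -> R)
  (s : seq (edge X Sigma)) : R := \prod_(e <- s) p e.

Definition pn (R : realType) (X : choiceType) (Sigma : finType)
  (E : set (edge X Sigma)) (p : edge X Sigma -> R) (n : nat) (x y : X) : \bar R :=
  \esum_(s in [set s | walk E x y s /\ size s = n]) (pathP p s)%:E.

Definition pFn (R : realType) (X : choiceType) (Sigma : finType)
  (E : set (edge X Sigma)) (p : edge X Sigma -> R) (F : seq (seq Sigma))
  (n : nat) (x y : X) : \bar R :=
  \esum_(s in [set s | walk E x y s /\ size s = n /\ avoids F s]) (pathP p s)%:E.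

Definition root_limsup (R : realType) (a : nat -> \bar R) : \bar R :=
  limn_esup (fun n => poweR (a n) (n%:R)^-1).

Definition rhoP (R : realType) (X : choiceType) (Sigma : finType)
  (E : set (edge X Sigma)) (p : edge X Sigma -> R) (x y : X) : \bar R :=
  root_limsup (fun n => pn E p n x y).

Definition rhoPF (R : realType) (X : choiceType) (Sigma : finType)
  (E : set (edge X Sigma)) (p : edge X Sigma -> R) (F : seq (seq Sigma))
  (x y : X) : \bar R :=
  root_limsup (fun n => pFn E p F n x y).

(* Main.v *)
Require Import Defs.
From HB Require Import structures.
From mathcomp Require Import all_boot all_order all_algebra.
From mathcomp Require Import all_classical all_reals all_analysis.
From mathcomp Require Import zify ring lra.
Import Order.TTheory GRing.Theory Num.Theory.
Set Implicit Arguments. Unset Strict Implicit. Unset Printing Implicit Defensive.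
Local Open Scope classical_set_scope.
Local Open Scope ring_scope.

Definition endv (X Sigma : Type) (x : X) (s : seq (edge X Sigma)) : X :=
  last x (map (@eterm X Sigma) s).

Lemma walk_endv (X Sigma : Type) (E : set (edge X Sigma)) x y s :
  walk E x y s -> endv x s = y.
Proof.
elim: s x => [|e s IH] x /=; first by [].
by case=> _ [_ /IH]; rewrite /endv.
Qed.

Lemma walk_catI (X Sigma : Type) (E : set (edge X Sigma)) x z y s1 s2 :
  walk E x z s1 -> walk E z y s2 -> walk E x y (s1 ++ s2).
Proof.
elim: s1 x => [|e s1 IH] x /=; first by move=> ->.
by case=> Ee [ex /IH H] /H.
Qed.

Lemma walk_catE (X Sigma : Type) (E : set (edge X Sigma)) x y s1 s2 :
  walk E x y (s1 ++ s2) -> walk E x (endv x s1) s1 /\ walk E (endv x s1) y s2.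
Proof.
elim: s1 x => [|e s1 IH] x /=; first by [].
by case=> Ee [ex /IH [H1 H2]].
Qed.

Lemma size_plabel (X Sigma : Type) (s : seq (edge X Sigma)) : size (plabel s) = size s.
Proof. by rewrite /plabel size_map. Qed.

Lemma plabel_cat (X Sigma : Type) (s1 s2 : seq (edge X Sigma)) :
  plabel (s1 ++ s2) = plabel s1 ++ plabel s2.
Proof. by rewrite /plabel map_cat. Qed.

Lemma return_walk (X Sigma : Type) (E : set (edge X Sigma)) (K : nat) :
  (forall e, E e -> exists s, walk E (eterm e) (einit e) s /\ (size s <= K)%N) ->
  forall s x y, walk E x y s -> exists s', walk E y x s' /\ (size s' <= K * size s)%N.
Proof.
move=> HK; elim=> [|e s IH] x y /=.
  by move=> ->; exists [::].
case=> Ee [ex /IH [s' [w1 h1]]].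
have [r [wr hr]] := HK e Ee.
exists (s' ++ r); split; first by apply: walk_catI w1 _; rewrite -ex.
by rewrite size_cat mulnS addnC leq_add.
Qed.

Lemma cycle_exists (X : Type) (Sigma : eqType) (E : set (edge X Sigma))
  (F : seq (seq Sigma)) (K D : nat) :
  (forall e, E e -> exists s, walk E (eterm e) (einit e) s /\ (size s <= K)%N) ->
  all (fun w => size w != 0%N) F ->
  (forall x : X, exists (y : X) (w : seq Sigma),
    w \in F /\ (exists s, walk E x y s /\ (size s <= D)%N) /\
    (exists (z : X) s, walk E y z s /\ plabel s = w)) ->
  forall v, exists c, walk E v v c /\ (0 < size c)%N /\
    (size c <= (D + \max_(w <- F) size w) * K.+1)%N /\
    has (fun w => infix w (plabel c)) F.
Proof.
move=> HK HF Hd v.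
have [y [w [wF [[u [wu su]] [z [q [wq lq]]]]]]] := Hd v.
have wt : walk E v z (u ++ q) by exact: walk_catI wu wq.
have [r [wr sr]] := return_walk HK wt.
have sw : (size w <= \max_(w <- F) size w)%N.
  by rewrite (@leq_bigmax_seq _ F xpredT (fun w => size w) w wF).
have w0 : (0 < size w)%N.
  by move/allP: HF => /(_ w wF); rewrite lt0n.
have sq : size q = size w by rewrite -lq size_plabel.
exists ((u ++ q) ++ r); split; first exact: walk_catI wt wr.
split; first by rewrite !size_cat sq; lia.
split.
  rewrite size_cat; apply: (leq_trans (leq_add (leqnn _) sr)).
  rewrite [(K * _)%N]mulnC -mulnS leq_mul2r; apply/orP; right.
  by rewrite size_cat sq leq_add.
apply/hasP; exists w => //.
by rewrite !plabel_cat lq -catA; apply: infix_infix.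
Qed.
Fixpoint ins (X Sigma : Type) (M : nat) (cyc : X -> seq (edge X Sigma)) (f : nat)
  (x : X) (s : seq (edge X Sigma)) (bs : seq bool) : seq (edge X Sigma) :=
  match f with
  | 0 => s
  | f'.+1 => if (size s < M)%N then s else
      take M s ++ (if head false bs then cyc (endv x (take M s)) else [::]) ++
      ins M cyc f' (endv x (take M s)) (drop M s) (behead bs)
  end.

Lemma ins_small (X Sigma : Type) M (cyc : X -> seq (edge X Sigma)) f x s bs :
  (size s < M)%N -> ins M cyc f x s bs = s.
Proof. by case: f => //= f ->. Qed.

Lemma ins_take (X Sigma : Type) M (cyc : X -> seq (edge X Sigma)) f x s bs :
  take M (ins M cyc f x s bs) = take M s.
Proof.
case: f => //= f; case: ifP => // /negbT; rewrite -leqNgt => hs.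
by rewrite take_size_cat // size_takel.
Qed.

Lemma ins_size_ge (X Sigma : Type) M (cyc : X -> seq (edge X Sigma)) f x s bs :
  (size s <= size (ins M cyc f x s bs))%N.
Proof.
elim: f x s bs => //= f IH x s bs; case: ifP => // _.
rewrite -{1}(cat_take_drop M s) !size_cat leq_add2l.
by apply: leq_trans (IH _ _ (behead bs)) _; exact: leq_addl.
Qed.

Lemma ins_size_le (X Sigma : Type) M (cyc : X -> seq (edge X Sigma)) T f x s bs :
  (forall v, size (cyc v) <= T)%N ->
  (size (ins M cyc f x s bs) <= size s + T * count id bs)%N.
Proof.
move=> hT; elim: f x s bs => [|f IH] x s bs /=; first by rewrite leq_addr.
case: ifP => _; first by rewrite leq_addr.
rewrite -[in X in (_ <= X)%N](cat_take_drop M s) !size_cat -!addnA leq_add2l.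
case: bs => [|b bs] /=.
  by rewrite muln0 addn0 add0n; apply: leq_trans (IH _ _ [::]) _; rewrite muln0 addn0.
rewrite mulnDr; case: b => /=.
  rewrite muln1 [(size (drop _ _) + _)%N]addnC -addnA leq_add //.
  by rewrite addnC; apply: IH.
by rewrite muln0 add0n; apply: IH.
Qed.

Lemma ins_walk (X Sigma : Type) (E : set (edge X Sigma)) M cyc :
  (forall v, walk E v v (cyc v)) ->
  forall f x y s bs, walk E x y s -> walk E x y (ins M cyc f x s bs).
Proof.
move=> hc; elim=> [|f IH] x y s bs hw //=; case: ifP => // _.
have hw' : walk E x y (take M s ++ drop M s) by rewrite cat_take_drop.
have [w1 w2] := walk_catE hw'.
apply: walk_catI w1 _; case: (head false bs) => /=; last exact: IH.
apply: walk_catI (hc _) _; exact: IH.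
Qed.

Lemma pathP_cat (R : realType) (X Sigma : Type) (p : edge X Sigma -> R) s1 s2 :
  Defs.pathP p (s1 ++ s2) = Defs.pathP p s1 * Defs.pathP p s2.
Proof. by rewrite /Defs.pathP big_cat. Qed.

Lemma pathP_ge (R : realType) (X Sigma : Type) (E : set (edge X Sigma))
  (p : edge X Sigma -> R) (a : R) :
  0 <= a -> (forall e, E e -> a <= p e) ->
  forall s x y, walk E x y s -> a ^+ size s <= Defs.pathP p s.
Proof.
move=> a0 hp; elim=> [|e s IH] x y /=; first by rewrite /Defs.pathP big_nil expr0.
case=> Ee [_ /IH H]; rewrite /Defs.pathP big_cons exprS.
by apply: ler_pM => //; [exact: exprn_ge0|exact: hp].
Qed.

Lemma pathP_ge0 (R : realType) (X Sigma : Type) (E : set (edge X Sigma))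
  (p : edge X Sigma -> R) :
  (forall e, E e -> 0 <= p e) ->
  forall s x y, walk E x y s -> 0 <= Defs.pathP p s.
Proof.
move=> hp s x y hw; have := pathP_ge (lexx 0) hp hw.
by apply: le_trans; exact: exprn_ge0.
Qed.

Lemma ins_weight (R : realType) (X Sigma : Type) (E : set (edge X Sigma))
  (p : edge X Sigma -> R) M cyc (b : R) :
  0 <= b -> b <= 1 -> (forall e, E e -> 0 <= p e) -> (forall v, b <= Defs.pathP p (cyc v)) ->
  forall f x y s bs, walk E x y s ->
  Defs.pathP p s * b ^+ count id bs <= Defs.pathP p (ins M cyc f x s bs).
Proof.
move=> b0 b1 hp hc.
have hs : forall s x y (bs : seq bool), walk E x y s -> Defs.pathP p s * b ^+ count id bs <= Defs.pathP p s.
  move=> s x y bs hw; apply: ler_piMr. exact: (@pathP_ge0 R X Sigma E p hp s x y hw).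
  exact: exprn_ile1.
elim=> [|f IH] x y s bs /= hw; first exact: hs hw.
case: ifP => _; first exact: hs hw.
have hw' : walk E x y (take M s ++ drop M s) by rewrite cat_take_drop.
have [w1 w2] := walk_catE hw'.
have -> : Defs.pathP p s = Defs.pathP p (take M s) * Defs.pathP p (drop M s).
  by rewrite -pathP_cat cat_take_drop.
rewrite !pathP_cat -mulrA ler_wpM2l //; first exact: (@pathP_ge0 _ _ _ _ _ hp _ _ _ w1).
have P1 := (@pathP_ge0 _ _ _ _ _ hp _ _ _ w1).
case: bs => [|c bs] /=.
  have -> : Defs.pathP p [::] = 1 by rewrite /Defs.pathP big_nil.
  rewrite mul1r; exact: (IH _ _ _ [::] w2).
rewrite exprD; case: c => /=.
  rewrite expr1 mulrCA; apply: ler_pM.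
  - exact: b0.
  - by apply: mulr_ge0; [exact: (@pathP_ge0 _ _ _ _ _ hp _ _ _ w2)|exact: exprn_ge0].
  - exact: hc.
  - exact: IH w2.
have -> : Defs.pathP p [::] = 1 by rewrite /Defs.pathP big_nil.
rewrite expr0 !mul1r; exact: IH w2.
Qed.

Lemma catlI (T : Type) (s a b : seq T) : s ++ a = s ++ b -> a = b.
Proof. by elim: s => //= x s IH [] /IH. Qed.

Lemma avoids_take (X : Type) (Sigma : eqType) (F : seq (seq Sigma)) n (s : seq (edge X Sigma)) :
  avoids F s -> avoids F (take n s).
Proof.
rewrite /avoids; apply: contra => /hasP [w wF hw]; apply/hasP; exists w => //.
apply: infix_trans hw _; rewrite /plabel map_take; apply: infix_take.
Qed.

Lemma avoids_drop (X : Type) (Sigma : eqType) (F : seq (seq Sigma)) n (s : seq (edge X Sigma)) :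
  avoids F s -> avoids F (drop n s).
Proof.
rewrite /avoids; apply: contra => /hasP [w wF hw]; apply/hasP; exists w => //.
apply: infix_trans hw _; rewrite -{2}(cat_take_drop n s) plabel_cat; apply: suffix_infix.
Qed.

Lemma ins_clash (X : Type) (Sigma : eqType) (F : seq (seq Sigma)) M
  (cyc : X -> seq (edge X Sigma)) f v v' d bs A :
  (size (cyc v) <= M)%N -> ~~ avoids F (cyc v) -> avoids F d ->
  cyc v ++ A = ins M cyc f v' d bs -> False.
Proof.
move=> hM hc hd he.
case: (leqP (size (cyc v)) (size d)) => hs.
  have : take (size (cyc v)) (cyc v ++ A) = take (size (cyc v)) d.
    rewrite he -(take_takel _ hM) ins_take take_takel //.
  rewrite take_size_cat // => hcd.
  by move: hc; rewrite hcd avoids_take.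
have hsm : (size d < M)%N by apply: leq_trans hs hM.
move: he; rewrite ins_small // => he.
by move: hs; rewrite -he size_cat ltnNge leq_addr.
Qed.

Lemma ins_big (X Sigma : Type) M (cyc : X -> seq (edge X Sigma)) f x s bs :
  (M <= size s)%N -> ins M cyc f.+1 x s bs =
  take M s ++ (if head false bs then cyc (endv x (take M s)) else [::]) ++
      ins M cyc f (endv x (take M s)) (drop M s) (behead bs).
Proof. by move=> h /=; rewrite ltnNge h. Qed.

Lemma ins_inj (X : Type) (Sigma : eqType) (F : seq (seq Sigma)) M
  (cyc : X -> seq (edge X Sigma)) :
  (0 < M)%N ->
  (forall v, size (cyc v) <= M)%N ->
  (forall v, ~~ avoids F (cyc v)) ->
  forall f x s s' bs bs',
  avoids F s -> avoids F s' ->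
  size bs = (size s %/ M)%N -> size bs' = (size s' %/ M)%N ->
  (size s <= f)%N -> (size s' <= f)%N ->
  ins M cyc f x s bs = ins M cyc f x s' bs' -> s = s' /\ bs = bs'.
Proof.
move=> M0 hM hc; elim=> [|f IH] x s s' bs bs' av av' hb hb' hf hf'.
  move: hf hf' hb hb'; rewrite !leqn0 => /nilP -> /nilP -> /=.
  by rewrite div0n => /size0nil -> /size0nil ->.
have smallb : forall (t : seq (edge X Sigma)) (c : seq bool),
    (size t < M)%N -> size c = (size t %/ M)%N -> c = [::].
  by move=> t c ht hc'; apply: size0nil; rewrite hc' divn_small.
have [hs|hs] := ltnP (size s) M; have [hs'|hs'] := ltnP (size s') M.
- rewrite !ins_small // => ->; split=> //.
  by rewrite (smallb _ _ hs hb) (smallb _ _ hs' hb').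
- rewrite (ins_small cyc f.+1 x bs hs) (ins_big cyc f x bs' hs') => he; exfalso.
  by move: hs; rewrite he size_cat size_takel // ltnNge leq_addr.
- rewrite (ins_small cyc f.+1 x bs' hs') (ins_big cyc f x bs hs) => he; exfalso.
  by move: hs'; rewrite -he size_cat size_takel // ltnNge leq_addr.
rewrite !ins_big // => he.
have ht : take M s = take M s'.
  by move: (congr1 (take M) he); rewrite !take_size_cat ?size_takel.
move: he; rewrite -ht => /catlI.
have hbd : forall (t : seq (edge X Sigma)) (c : seq bool), (M <= size t)%N ->
    size c = (size t %/ M)%N -> size (behead c) = (size (drop M t) %/ M)%N /\ c = head false c :: behead c.
  move=> t c ht' hc'.
  have e1 : size t = (size (drop M t) + 1 * M)%N by rewrite size_drop mul1n subnK.
  rewrite e1 divnDMl // addn1 in hc'.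
  by case: c hc' => //= b c [->].
have [hb1 eb] := hbd _ _ hs hb; have [hb1' eb'] := hbd _ _ hs' hb'.
have hfd : forall t : seq (edge X Sigma), (M <= size t)%N -> (size t <= f.+1)%N -> (size (drop M t) <= f)%N.
  by move=> t h1 h2; rewrite size_drop; lia.
have IH' := IH (endv x (take M s)) (drop M s) (drop M s') (behead bs) (behead bs')
  (avoids_drop _ av) (avoids_drop _ av') hb1 hb1' (hfd _ hs hf) (hfd _ hs' hf').
case hh: (head false bs); case hh': (head false bs') => /=.
- move/catlI => /IH' [h1 h2]; split.
    by rewrite -(cat_take_drop M s) -(cat_take_drop M s') ht h1.
  by rewrite eb eb' hh hh' h2.
- by move/(ins_clash (hM _) (hc _) (avoids_drop _ av')).
- by move/esym/(ins_clash (hM _) (hc _) (avoids_drop _ av)).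
- move=> /IH' [h1 h2]; split.
    by rewrite -(cat_take_drop M s) -(cat_take_drop M s') ht h1.
  by rewrite eb eb' hh hh' h2.
Qed.

Fixpoint bseqs (k : nat) : seq (seq bool) :=
  if k is k'.+1 then [seq false :: b | b <- bseqs k'] ++ [seq true :: b | b <- bseqs k']
  else [:: [::]].

Lemma bseqs_uniq k : uniq (bseqs k).
Proof.
have inj : forall c : bool, injective (cons c) by move=> c ?? [].
elim: k => //= k IH; rewrite cat_uniq !(map_inj_uniq (inj _)) IH /= andbT.
apply/hasPn => b /mapP [c _ ->]; apply/mapP => -[d _ E].
by move: (congr1 (head true) E).
Qed.

Lemma bseqs_size k bs : bs \in bseqs k -> size bs = k.
Proof.
elim: k bs => [|k IH] bs /=; first by rewrite inE => /eqP ->.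
by rewrite mem_cat => /orP [] /mapP [c /IH h ->] /=; rewrite h.
Qed.

Lemma bseqs_sum (R : realType) (b : R) k :
  \sum_(bs <- bseqs k) b ^+ count id bs = (1 + b) ^+ k.
Proof.
elim: k => [|k IH] /=; first by rewrite big_seq1 expr0.
rewrite big_cat !big_map /= exprS mulrDl mul1r IH; congr (_ + _).
by rewrite -IH mulr_sumr; apply: eq_bigr => bs _; rewrite add1n exprS.
Qed.

Lemma esum_ge_seq (R : realType) (T : choiceType) (S : set T) (a : T -> \bar R) (l : seq T) :
  uniq l -> (forall t, t \in l -> S t) ->
  (\sum_(t <- l) a t <= \esum_(t in S) a t)%E.
Proof.
move=> ul lS; apply: esum_ge; exists [set` l]; last by rewrite fsbig_seq.
split; first exact: finite_seq.
by move=> t /= tl; apply: lS.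
Qed.

Lemma esum_le_seq (R : realType) (T : choiceType) (S : set T) (a : T -> \bar R) (z : \bar R) :
  (forall l : seq T, uniq l -> (forall t, t \in l -> S t) -> (\sum_(t <- l) a t <= z)%E) ->
  (\esum_(t in S) a t <= z)%E.
Proof.
move=> H; apply: ge_ereal_sup => _ [Y [finY YS] <-].
rewrite fsbig_finite //; apply: H; first exact: finmap.fset_uniq.
move=> t; rewrite (in_fset_set finY) inE; exact: YS.
Qed.

Lemma sum_partition (R : realType) (I J : eqType) (r : seq I) (js : seq J) (h : I -> J)
  (F : I -> R) :
  uniq js -> (forall i, i \in r -> h i \in js) ->
  \sum_(i <- r) F i = \sum_(j <- js) \sum_(i <- r | h i == j) F i.
Proof.
move=> ujs hr.
under [RHS]eq_bigr => j _ do rewrite big_mkcond.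
rewrite exchange_big /=; rewrite big_seq_cond [RHS]big_seq_cond.
apply: eq_bigr => i /andP [ir _].
rewrite -big_mkcond /= (big_rem (h i)) ?hr // eqxx [X in _ = _ + X]big1_seq ?addr0 //.
move=> j /andP [/eqP <-]; by rewrite mem_rem_uniqF.
Qed.

Lemma mass_bound (R : realType) (X : choiceType) (Sigma : choiceType)
  (E : set (edge X Sigma)) (p : edge X Sigma -> R) :
  (forall e, E e -> 0 <= p e) ->
  (forall x, (\esum_(e in [set e | E e /\ einit e = x]) (p e)%:E <= 1)%E) ->
  forall m x (L : seq (seq (edge X Sigma))), uniq L ->
  (forall s, s \in L -> (exists y, walk E x y s) /\ size s = m) ->
  \sum_(s <- L) Defs.pathP p s <= 1.
Proof.
move=> hp hsum; elim=> [|m IH] x L uL hL.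
  have L0 : forall s, s \in L -> s = [::] by move=> s /hL [_ /size0nil].
  have : (size L <= 1)%N.
    have -> : (1 = size [:: [::] : seq (edge X Sigma)])%N by [].
    by apply: uniq_leq_size => // s /L0 ->; rewrite inE.
  case: L {uL hL} L0 => [|s [|t L]] //= L0 _; first by rewrite big_nil.
  by rewrite big_seq1 (L0 s (mem_head _ _)) /Defs.pathP big_nil.
case: L uL hL => [|s0 L] uL hL; first by rewrite big_nil.
have [e0 [s0' es0]] : exists e0 s0', s0 = e0 :: s0'.
  have [_] := hL s0 (mem_head _ _); case: (s0) => // e s0' _; by exists e, s0'.
set L1 := s0 :: L.
pose hd := fun s : seq (edge X Sigma) => head e0 s.
have hL1 : forall s, s \in L1 -> E (hd s) /\ einit (hd s) = x /\
    s = hd s :: behead s /\ (exists y, walk E (eterm (hd s)) y (behead s)) /\ size (behead s) = m.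
  move=> s /hL [[y]]; case: s => //= e s [Ee [ex hw]] [hs].
  by split=> //; split=> //; split=> //; split=> //; exists y.
rewrite (@sum_partition R _ _ L1 (undup (map hd L1)) hd) ?undup_uniq //; last first.
  by move=> s sL; rewrite mem_undup map_f.
apply: (@le_trans _ _ (\sum_(e <- undup (map hd L1)) p e)).
  rewrite big_seq [X in _ <= X]big_seq; apply: ler_sum => e.
  rewrite mem_undup => /mapP [s1 s1L ->].
  have [Ee [ex _]] := hL1 _ s1L.
  set L2 := [seq s <- L1 | hd s == hd s1].
  have hL2 : forall s, s \in L2 -> s = hd s1 :: behead s.
    move=> s; rewrite mem_filter => /andP [/eqP <- sL].
    by have [_ [_ [-> _]]] := hL1 _ sL.
  rewrite -big_filter.
  have -> : \sum_(s <- L2) Defs.pathP p s =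
      p (hd s1) * \sum_(s <- map behead L2) Defs.pathP p s.
    rewrite big_map mulr_sumr big_seq [RHS]big_seq; apply: eq_bigr => s sL2.
    by rewrite {1}(hL2 _ sL2) /Defs.pathP big_cons.
  rewrite -[X in _ <= X]mulr1 ler_wpM2l //; first exact: hp.
  apply: (IH (eterm (hd s1))).
    rewrite map_inj_in_uniq; first exact: filter_uniq.
    by move=> a b /hL2 ha /hL2 hb he; rewrite ha hb he.
  move=> s /mapP [t tL2 ->].
  have tL1 : t \in L1 by move: tL2; rewrite mem_filter => /andP [].
  have [_ [_ [_ [hw hs]]]] := hL1 _ tL1.
  by move: tL2; rewrite mem_filter => /andP [/eqP ht _]; rewrite -ht.
rewrite -lee_fin -sumEFin; apply: le_trans (hsum x).
apply: esum_ge_seq; first exact: undup_uniq.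
move=> e; rewrite mem_undup => /mapP [s1 s1L ->].
by have [Ee [ex _]] := hL1 _ s1L.
Qed.

Lemma catIr (T : Type) (s a b : seq T) : a ++ s = b ++ s -> a = b.
Proof.
move=> h; have := congr1 (@rev T) h; rewrite !rev_cat => /catlI.
by move/(congr1 (@rev T)); rewrite !revK.
Qed.

Lemma pn_ge_seq (R : realType) (X : choiceType) (Sigma : finType)
  (E : set (edge X Sigma)) (p : edge X Sigma -> R) m x y (L : seq (seq (edge X Sigma))) :
  uniq L -> (forall s, s \in L -> walk E x y s /\ size s = m) ->
  ((\sum_(s <- L) Defs.pathP p s)%:E <= pn E p m x y)%E.
Proof.
move=> uL hL; rewrite -sumEFin; apply: esum_ge_seq => // s /hL [h1 h2]; by split.
Qed.

Lemma main_ineq (R : realType) (X : choiceType) (Sigma : finType)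
  (E : set (edge X Sigma)) (p : edge X Sigma -> R) (F : seq (seq Sigma))
  (M : nat) (cyc : X -> seq (edge X Sigma)) (a b : R) x0 y0 x y u v :
  (0 < M)%N -> 0 <= a -> 0 <= b -> b <= 1 ->
  (forall e, E e -> a <= p e) ->
  (forall w, walk E w w (cyc w)) -> (forall w, size (cyc w) <= M)%N ->
  (forall w, ~~ avoids F (cyc w)) -> (forall w, b <= Defs.pathP p (cyc w)) ->
  walk E x0 x u -> walk E y y0 v ->
  forall n (L : seq (seq (edge X Sigma))), uniq L ->
  (forall s, s \in L -> walk E x y s /\ size s = n /\ avoids F s) ->
  ((a ^+ (size u + size v) * (1 + b) ^+ (n %/ M) * \sum_(s <- L) Defs.pathP p s)%:E
    <= \sum_(m <- iota (n + (size u + size v)) ((n %/ M) * M).+1) pn E p m x0 y0)%E.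
Proof.
move=> M0 a0 b0 b1 hp hcw hcs hca hcb hu hv n L uL hL.
have hp0 : forall e, E e -> 0 <= p e by move=> e /hp; apply: le_trans.
set k := (n %/ M)%N; set c := (size u + size v)%N.
pose g := fun s bs => u ++ ins M cyc n x s bs ++ v.
pose Im := [seq g s bs | s <- L, bs <- bseqs k].
have hg : forall s bs, s \in L -> bs \in bseqs k ->
    walk E x0 y0 (g s bs) /\ (n + c <= size (g s bs) <= n + c + k * M)%N.
  move=> s bs sL bk; have [hw [hs _]] := hL _ sL.
  split; first by apply: walk_catI hu _; apply: walk_catI (ins_walk _ _ _ _ hw) hv.
  rewrite /g !size_cat; apply/andP; split.
    have := ins_size_ge M cyc n x s bs; move: (size (ins M cyc n x s bs)) => z hz.
    have hz' : (n <= z)%N by apply: leq_trans hz; rewrite hs.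
    rewrite /c; lia.
  have h1 := ins_size_le M n x s bs hcs.
  have h2 : (count id bs <= k)%N by rewrite -(bseqs_size bk) count_size.
  have h3 : (M * count id bs <= k * M)%N by rewrite mulnC leq_mul2r h2 orbT.
  move: (size (ins M cyc n x s bs)) h1 => z h1.
  have h1' : (z <= n + M * count id bs)%N by apply: leq_trans h1 _; rewrite hs.
  move: (M * count id bs)%N (k * M)%N h1' h3 => w1 w2 h1' h3.
  rewrite /c; lia.
have uIm : uniq Im.
  apply: allpairs_uniq => //; first exact: bseqs_uniq.
  move=> [s1 b1'] [s2 b2'] /allpairsP [[t1 c1] [/= t1L c1B [-> ->]]].
  move=> /allpairsP [[t2 c2] [/= t2L c2B [-> ->]]] /= he.
  have [hw1 [hs1 av1]] := hL _ t1L; have [hw2 [hs2 av2]] := hL _ t2L.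
  move: he; rewrite /g => /catlI /catIr /(ins_inj M0 hcs hca av1 av2).
  rewrite (bseqs_size c1B) (bseqs_size c2B) hs1 hs2 leqnn => /(_ erefl erefl isT isT).
  by case=> -> ->.
apply: (@le_trans _ _ ((\sum_(q <- Im) Defs.pathP p q)%:E)).
  rewrite lee_fin big_allpairs_dep /=.
  rewrite mulr_sumr big_seq [X in _ <= X]big_seq; apply: ler_sum => s sL.
  have [hw [hs _]] := hL _ sL.
  rewrite -(bseqs_sum b k) mulr_sumr mulr_suml big_seq [X in _ <= X]big_seq.
  apply: ler_sum => bs bk.
  rewrite /g !pathP_cat exprD.
  have Pu := pathP_ge a0 hp hu; have Pv := pathP_ge a0 hp hv.
  have Pi := @ins_weight R X Sigma E p M cyc b b0 b1 hp0 hcb n x y s bs hw.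
  have Pu0 := @pathP_ge0 _ _ _ _ _ hp0 _ _ _ hu.
  have Pv0 := @pathP_ge0 _ _ _ _ _ hp0 _ _ _ hv.
  have Ps0 := @pathP_ge0 _ _ _ _ _ hp0 _ _ _ hw.
  have ea0 : 0 <= a ^+ size u by exact: exprn_ge0.
  have eb0 : 0 <= b ^+ count id bs by exact: exprn_ge0.
  have ev0 : 0 <= a ^+ size v by exact: exprn_ge0.
  have key : forall (A1 A2 B1 B2 C1 C2 : R), 0 <= A1 -> 0 <= B1 -> 0 <= C1 ->
      A1 <= A2 -> B1 <= B2 -> C1 <= C2 -> A1 * B1 * C1 <= A2 * (C2 * B2).
    move=> A1 A2 B1 B2 C1 C2 ha hb hc h1 h2 h3; rewrite [C2 * B2]mulrC mulrA.
    apply: ler_pM => //; first exact: mulr_ge0.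
    by apply: ler_pM.
  rewrite -mulrA; apply: key => //; first exact: mulr_ge0.
  by rewrite mulrC.
rewrite (@sum_partition R _ _ Im (iota (n + c) (k * M).+1) size) ?iota_uniq //; last first.
  move=> q /allpairsP [[s bs] [sL bk ->]]; rewrite mem_iota.
  have [_ /andP [h1 h2]] := hg s bs sL bk; rewrite /= in h1 h2 *.
  by rewrite h1 /= addnS ltnS.
rewrite -sumEFin; apply: lee_sum => m _.
rewrite -big_filter; apply: pn_ge_seq; first exact: filter_uniq.
move=> q; rewrite mem_filter => /andP [/eqP hq /allpairsP [[s bs] [/= sL bk eq]]].
by split=> //; rewrite eq; have [] := hg s bs sL bk.
Qed.

Lemma root_pow (R : realType) (x : R) (n : nat) :
  0 <= x -> (0 < n)%N -> (x ^+ n) `^ (n%:R^-1) = x.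
Proof.
move=> x0 n0; rewrite -powR_mulrn // -powRrM mulfV ?powRr1 //.
by rewrite pnatr_eq0 -lt0n.
Qed.

Lemma pow_root (R : realType) (x : R) (n : nat) :
  0 <= x -> (0 < n)%N -> (x `^ (n%:R^-1)) ^+ n = x.
Proof.
move=> x0 n0; rewrite -powR_mulrn ?powR_ge0 // -powRrM mulVf ?powRr1 //.
by rewrite pnatr_eq0 -lt0n.
Qed.

Lemma LS1 (R : realType) (u : nat -> \bar R) (z : \bar R) N :
  (forall n, (N <= n)%N -> (u n <= z)%E) -> (limn_esup u <= z)%E.
Proof.
move=> hu; rewrite /limn_esup /limf_esup.
apply: (@le_trans _ _ (ereal_sup [set u x | x in [set n | (N <= n)%N]])).
  apply: ereal_inf_lbound; exists [set n | (N <= n)%N] => //.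
  exact: nbhs_infty_ge.
by apply: ge_ereal_sup => _ [n hn <-]; apply: hu.
Qed.

Lemma LS2 (R : realType) (u : nat -> \bar R) (r : \bar R) :
  (limn_esup u < r)%E -> exists N, forall n, (N <= n)%N -> (u n < r)%E.
Proof.
rewrite /limn_esup /limf_esup => /ereal_inf_lt [_ [V [N _ hN] <-]] hV.
exists N => n hn; apply: le_lt_trans hV; apply: ereal_sup_ubound.
by exists n => //; apply: hN.
Qed.

Lemma LS3 (R : realType) (u : nat -> \bar R) (c : \bar R) :
  (forall N, exists n, (N <= n)%N /\ (c <= u n)%E) -> (c <= limn_esup u)%E.
Proof.
move=> hu; rewrite /limn_esup /limf_esup.
apply: le_ereal_inf_tmp => _ [V [N _ hN] <-].
have [n [hn cn]] := hu N; apply: le_trans cn _; apply: ereal_sup_ubound.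
by exists n => //; apply: hN.
Qed.

Lemma bernoulli (R : realType) (d : R) (n : nat) :
  0 <= d -> 1 + n%:R * d <= (1 + d) ^+ n.
Proof.
move=> d0; elim: n => [|n IH]; first by rewrite mul0r addr0 expr0.
rewrite exprS; apply: le_trans (ler_wpM2l _ IH); last by rewrite addr_ge0.
rewrite mulrDr mulr1 -natr1 mulrDl mul1r addrA.
have : 0 <= d * (n%:R * d) by rewrite mulr_ge0 ?mulr_ge0.
lra.
Qed.

Lemma growth (R : realType) (C w : R) :
  0 <= C -> 1 < w -> exists N, forall n, (N <= n)%N -> C * (n.+1)%:R <= w ^+ n.
Proof.
move=> C0 w1.
have w0 : 0 <= w by apply: le_trans (ltW w1); lra.
set v := Num.sqrt w.
have v2 : v ^+ 2 = w by rewrite sqr_sqrtr.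
have v1 : 1 < v by rewrite -sqrtr1 ltr_sqrt //; lra.
set d := v - 1.
have d0 : 0 < d by rewrite /d; lra.
have hx : 0 <= 2 * C / d ^+ 2.
  by apply: divr_ge0; [lra | apply: exprn_ge0; exact: ltW].
exists (Num.Def.archi_bound (2 * C / d ^+ 2)).+1 => n hn.
have hN := archi_boundP hx.
have hn' : 2 * C / d ^+ 2 < n%:R.
  by apply: lt_le_trans hN _; rewrite ler_nat; apply: leq_trans hn.
have hd2 : 0 < d ^+ 2 by exact: exprn_gt0.
have h1 : 2 * C <= n%:R * d ^+ 2.
  by move: hn'; rewrite ltr_pdivrMr // => /ltW.
have n1 : 1 <= n%:R :> R by rewrite ler1n; apply: leq_trans hn.
have hb := bernoulli n (ltW d0).
have e1 : w ^+ n = ((1 + d) ^+ n) ^+ 2 by rewrite -exprM mulnC exprM /d addrC subrK v2.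
rewrite e1; apply: (@le_trans _ _ ((1 + n%:R * d) ^+ 2)); last first.
  have hd0 : 0 <= 1 + d by apply: addr_ge0 => //; exact: ltW.
  have hb0 : 0 <= 1 + n%:R * d by apply: addr_ge0 => //; apply: mulr_ge0 => //; exact: ltW.
  by rewrite ler_sqr ?nnegrE // exprn_ge0.
rewrite -natr1.
have nd : 0 <= n%:R * d by rewrite mulr_ge0 // ltW.
have : C * (n%:R + 1) <= 2 * C * n%:R by nra.
have : 2 * C * n%:R <= n%:R * (n%:R * d ^+ 2) by nra.
nra.
Qed.

Lemma root_limsup_le (R : realType) (A : nat -> R) (z C : R) N :
  (forall n, 0 <= A n) -> 0 <= z -> 0 <= C ->
  (forall n, (N <= n)%N -> A n <= C * (n.+1)%:R * z ^+ n) ->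
  (root_limsup (fun n => (A n)%:E) <= z%:E)%E.
Proof.
move=> A0 z0 C0 hA; apply/lee_addgt0Pr => e e0.
have z1 : 0 < z + 1 by lra.
set w := 1 + e / (z + 1).
have ez : 0 < e / (z + 1) by apply: divr_gt0.
have w1 : 1 < w by rewrite /w; lra.
have [N' hN'] := growth C0 w1.
apply: (LS1 (N := maxn (maxn N N') 1)) => n.
rewrite !geq_max => /andP [/andP [hn hn'] n1].
rewrite poweR_EFin -EFinD lee_fin.
have hzw : 0 <= z * w by apply: mulr_ge0 => //; lra.
apply: (@le_trans _ _ (((z * w) ^+ n) `^ (n%:R^-1))).
  apply: ge0_ler_powR; rewrite ?nnegrE ?exprn_ge0 //.
  apply: le_trans (hA n hn) _; rewrite exprMn mulrC.
  by apply: ler_wpM2l; [exact: exprn_ge0|exact: hN'].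
rewrite root_pow //.
have : z * (e / (z + 1)) <= e.
  rewrite mulrA ler_pdivrMr //; nra.
rewrite /w; lra.
Qed.

Lemma walk_rep (X Sigma : Type) (E : set (edge X Sigma)) v c j :
  walk E v v c -> walk E v v (flatten (nseq j c)).
Proof. by move=> hc; elim: j => //= j IH; apply: walk_catI hc IH. Qed.

Lemma size_rep (T : Type) (c : seq T) j : size (flatten (nseq j c)) = (j * size c)%N.
Proof. by elim: j => //= j IH; rewrite size_cat IH mulSn. Qed.

Lemma sum_le_const (R : realType) (l : seq nat) (f : nat -> R) (K : R) :
  (forall m, m \in l -> f m <= K) -> \sum_(m <- l) f m <= (size l)%:R * K.
Proof.
elim: l => [|m l IH] h; first by rewrite big_nil mul0r.
rewrite big_cons /= -natr1 mulrDl mul1r addrC lerD //.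
  by apply: IH => m' hm'; apply: h; rewrite inE hm' orbT.
by apply: h; rewrite mem_head.
Qed.

Lemma pn_bounds (R : realType) (X : choiceType) (Sigma : finType)
  (E : set (edge X Sigma)) (p : edge X Sigma -> R) :
  (forall e, E e -> 0 <= p e) ->
  (forall x, (\esum_(e in [set e | E e /\ einit e = x]) (p e)%:E <= 1)%E) ->
  forall m x y, (0 <= pn E p m x y)%E /\ (pn E p m x y <= 1)%E.
Proof.
move=> hp hs m x y; split.
  apply: esum_ge0 => s [hw _]; rewrite lee_fin.
  exact: (@pathP_ge0 _ _ _ _ _ hp _ _ _ hw).
apply: esum_le_seq => L uL hL; rewrite sumEFin lee_fin.
apply: (mass_bound hp hs (m := m) (x := x)) => // s /hL [hw hsz].
by split => //; exists y.
Qed.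

Lemma fin_bound (R : realType) (x : \bar R) (z : R) :
  (0 <= x)%E -> (x <= z%:E)%E -> x = (fine x)%:E /\ 0 <= fine x /\ fine x <= z.
Proof. by case: x => [r| |] //=; rewrite !lee_fin. Qed.

Lemma powR_le1 (R : realType) (x r : R) : 0 <= x -> x <= 1 -> 0 <= r -> x `^ r <= 1.
Proof.
move=> x0 x1 r0; have := @ge0_ler_powR R r r0 x 1.
rewrite powR1; apply; rewrite ?nnegrE //.
Qed.

Theorem mainTheorem16 (R : realType) (X : choiceType) (Sigma : finType)
  (E : set (edge X Sigma)) (p : edge X Sigma -> R) (alpha : R)
  (F : seq (seq Sigma)) :
  uniformly_connected E ->
  0 < alpha ->
  (forall e, E e -> alpha <= p e) ->
  (forall x : X,
     (\esum_(e in [set e | E e /\ einit e = x]) (p e)%:E <= 1)%E) ->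
  F != [::] ->
  all (fun w => size w != 0%N) F ->
  rel_dense E F ->
  forall x0 y0 : X,
    (ereal_sup [set rhoPF E p F xy.1 xy.2 | xy in [set: X * X]]
       < rhoP E p x0 y0)%E.
Proof.
move=> [Hconn [K HK]] a0 hp hsum _ HF [D HD] x0 y0.
set a := Num.min alpha 1.
have a_gt0 : 0 < a by rewrite lt_min a0 ltr01.
have a_le1 : a <= 1 by rewrite ge_min lexx orbT.
have hpa : forall e, E e -> a <= p e.
  by move=> e /hp h; rewrite ge_min h.
have hp0 : forall e, E e -> 0 <= p e.
  by move=> e /hpa; apply: le_trans; exact: ltW.
have HC := cycle_exists HK HF HD.
set M := ((D + \max_(w <- F) size w) * K.+1)%N.
pose cyc := fun v => projT1 (cid (HC v)).
have hcyc : forall v, walk E v v (cyc v) /\ (0 < size (cyc v))%N /\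
    (size (cyc v) <= M)%N /\ has (fun w => infix w (plabel (cyc v))) F.
  by move=> v; exact: (projT2 (cid (HC v))).
have M0 : (0 < M)%N.
  by have [_ [h1 [h2 _]]] := hcyc x0; apply: leq_trans h1 h2.
set b := a ^+ M.
have b0 : 0 <= b by rewrite exprn_ge0 // ltW.
have b1 : b <= 1 by rewrite exprn_ile1 // ltW.
have hcb : forall v, b <= Defs.pathP p (cyc v).
  move=> v; have [hw [_ [hs _]]] := hcyc v.
  apply: le_trans (pathP_ge (ltW a_gt0) hpa hw).
  by rewrite /b; apply: ler_wiXn2l => //; exact: ltW.
have hca : forall v, ~~ avoids F (cyc v).
  by move=> v; rewrite /avoids negbK; have [_ [_ [_ h]]] := hcyc v.
have hcw : forall v, walk E v v (cyc v) by move=> v; have [] := hcyc v.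
have hcs : forall v, (size (cyc v) <= M)%N by move=> v; have [_ [_ []]] := hcyc v.
have pnb := pn_bounds hp0 hsum.
pose Q m := fine (pn E p m x0 y0).
have hQ : forall m, pn E p m x0 y0 = (Q m)%:E /\ 0 <= Q m /\ Q m <= 1.
  by move=> m; have [h1 h2] := pnb m x0 y0; exact: fin_bound h1 h2.
have rhoE : rhoP E p x0 y0 = root_limsup (fun m => (Q m)%:E).
  by rewrite /rhoP; congr root_limsup; apply: funext => m; have [] := hQ m.
have rho_le1 : (rhoP E p x0 y0 <= 1%:E)%E.
  rewrite rhoE; apply: (LS1 (N := 0%N)) => m _.
  have [_ [q0 q1]] := hQ m.
  by rewrite poweR_EFin lee_fin powR_le1 // invr_ge0.
have rho_ge : (a%:E <= rhoP E p x0 y0)%E.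
  rewrite rhoE; apply: LS3 => N.
  have [u0 hu0] := Hconn x0 y0.
  set l := size (cyc y0).
  have l0 : (0 < l)%N by have [_ []] := hcyc y0.
  exists (size u0 + N.+1 * l)%N; split.
    have h := leq_pmulr N.+1 l0; move: (N.+1 * l)%N h => t h; lia.
  have hw : walk E x0 y0 (u0 ++ flatten (nseq N.+1 (cyc y0))).
    by apply: walk_catI hu0 (walk_rep _ (hcw y0)).
  have n0 : (0 < size u0 + N.+1 * l)%N by rewrite addn_gt0 muln_gt0 l0 orbT.
  have [QE [q0 q1]] := hQ (size u0 + N.+1 * l)%N.
  have hge : a ^+ (size u0 + N.+1 * l) <= Q (size u0 + N.+1 * l)%N.
    have H := @pn_ge_seq R X Sigma E p (size u0 + N.+1 * l)%N x0 y0
      [:: u0 ++ flatten (nseq N.+1 (cyc y0))] erefl.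
    have H' : ((\sum_(s <- [:: u0 ++ flatten (nseq N.+1 (cyc y0))]) Defs.pathP p s)%:E <=
        pn E p (size u0 + N.+1 * l) x0 y0)%E.
      by apply: H => s; rewrite inE => /eqP ->; split=> //; rewrite size_cat size_rep.
    rewrite -lee_fin -QE; apply: le_trans H'.
    rewrite big_seq1 lee_fin; apply: le_trans (pathP_ge (ltW a_gt0) hpa hw).
    by rewrite size_cat size_rep.
  rewrite poweR_EFin lee_fin -{1}(root_pow (ltW a_gt0) n0).
  by apply: ge0_ler_powR; rewrite ?nnegrE ?invr_ge0 ?ler0n ?exprn_ge0 // ltW.
have rho0 : (0 <= rhoP E p x0 y0)%E by apply: le_trans rho_ge; rewrite lee_fin ltW.
have [rhoF [rr0 rr1]] := fin_bound rho0 rho_le1.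
set rr := fine (rhoP E p x0 y0) in rhoF rr0 rr1.
have a_rr : a <= rr by move: rho_ge; rewrite rhoF lee_fin.
pose g := (1 + b) `^ (M%:R^-1).
have g0 : 0 <= g by exact: powR_ge0.
have gM : g ^+ M = 1 + b by apply: pow_root => //; lra.
have bpos : 0 < b by rewrite exprn_gt0.
have g1 : 1 < g.
  rewrite ltNge; apply/negP => hg; have := exprn_ile1 M g0 hg; rewrite gM; lra.
have key : forall x y, (rhoPF E p F x y <= (rr / g)%:E)%E.
  move=> x y.
  have [u hu] := Hconn x0 x; have [v hv] := Hconn y y0.
  set c := (size u + size v)%N.
  pose coef n := a ^+ c * (1 + b) ^+ (n %/ M).
  have coef_gt0 : forall n, 0 < coef n.
    by move=> n; rewrite mulr_gt0 // exprn_gt0 //; lra.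
  pose B n := (\sum_(m <- iota (n + c) ((n %/ M) * M).+1) Q m) / coef n.
  have hPF : forall n, (0 <= pFn E p F n x y)%E /\ (pFn E p F n x y <= (B n)%:E)%E.
    move=> n; split.
      apply: esum_ge0 => s [hw _]; rewrite lee_fin.
      exact: (@pathP_ge0 _ _ _ _ _ hp0 _ _ _ hw).
    apply: esum_le_seq => L uL hL; rewrite sumEFin lee_fin.
    have H := @main_ineq R X Sigma E p F M cyc a b x0 y0 x y u v M0 (ltW a_gt0) b0 b1
      hpa hcw hcs hca hcb hu hv n L uL hL.
    rewrite ler_pdivlMr // mulrC -lee_fin; apply: le_trans H _.
    rewrite (eq_bigr (fun m => (Q m)%:E)) ?sumEFin //.
    by move=> m _; have [] := hQ m.
  pose A n := fine (pFn E p F n x y).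
  have hA : forall n, pFn E p F n x y = (A n)%:E /\ 0 <= A n /\ A n <= B n.
    by move=> n; have [h1 h2] := hPF n; exact: fin_bound h1 h2.
  have rhoFE : rhoPF E p F x y = root_limsup (fun n => (A n)%:E).
    by rewrite /rhoPF; congr root_limsup; apply: funext => n; have [] := hA n.
  apply/lee_addgt0Pr => e e0.
  set r := rr + e * g.
  have rr_r : rr < r.
    have : 0 < e * g by apply: mulr_gt0 => //; lra.
    rewrite /r; lra.
  have : (root_limsup (fun m => (Q m)%:E) < r%:E)%E by rewrite -rhoE rhoF lte_fin.
  move=> /LS2 [N0 hN0].
  set s := Num.min r 1.
  have s0 : 0 <= s by rewrite le_min ler01 andbT; apply: le_trans (ltW rr_r).
  have s1 : s <= 1 by rewrite ge_min lexx orbT.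
  have sr : s <= r by rewrite ge_min lexx.
  have Qs : forall m, (maxn N0 1 <= m)%N -> Q m <= s ^+ m.
    move=> m; rewrite geq_max => /andP [h1 h2].
    have [_ [q0 q1]] := hQ m.
    have := hN0 m h1; rewrite poweR_EFin lte_fin => hlt.
    have r0 : 0 <= r by apply: le_trans (ltW rr_r).
    have Qr : Q m <= r ^+ m.
      rewrite -(pow_root q0 h2) ler_pXn2r // ?nnegrE ?powR_ge0 //; exact: ltW.
    by rewrite /s minEle; case: ifP => _ //; rewrite expr1n.
  set N1 := maxn N0 1.
  have hg : forall n, g ^+ n <= (1 + b) ^+ (n %/ M).+1.
    move=> n; have b10 : 0 <= 1 + b by lra.
    rewrite -(powR_mulrn _ g0) /g -powRrM -(powR_mulrn _ b10).
    apply: ler_powR; first lra.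
    rewrite mulrC ler_pdivrMr ?ltr0n // -natrM ler_nat.
    exact: ltnW (ltn_ceil _ M0).
  have Abound : forall n, (N1 <= n)%N ->
      A n <= ((1 + b) / a ^+ c) * (n.+1)%:R * (s / g) ^+ n.
    move=> n hn; have [_ [_ AB]] := hA n; apply: le_trans AB _.
    have hsm : \sum_(m <- iota (n + c) (n %/ M * M).+1) Q m <= (n.+1)%:R * s ^+ n.
      apply: le_trans (@sum_le_const R _ _ (s ^+ n) _) _.
        move=> m; rewrite mem_iota => /andP [hm _].
        have hm' : (N1 <= m)%N by apply: leq_trans hn (leq_trans (leq_addr c n) hm).
        apply: le_trans (Qs m hm') _.
        apply: ler_wiXn2l => //; exact: leq_trans (leq_addr c n) hm.
      rewrite size_iota ler_wpM2r ?exprn_ge0 // ler_nat ltnS; exact: leq_divM.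
    have ac0 : 0 < a ^+ c by exact: exprn_gt0.
    have bk0 : 0 < (1 + b) ^+ (n %/ M) by apply: exprn_gt0; lra.
    have gn0 : 0 < g ^+ n by apply: exprn_gt0; lra.
    have P0 : 0 <= (n.+1)%:R * s ^+ n by apply: mulr_ge0 => //; exact: exprn_ge0.
    rewrite /B /coef.
    have ci0 : 0 <= (a ^+ c * (1 + b) ^+ (n %/ M))^-1.
      by rewrite invr_ge0; apply: mulr_ge0; exact: ltW.
    apply: le_trans (ler_wpM2r ci0 hsm) _.
    set P' := (n.+1)%:R * s ^+ n.
    have b10 : 1 + b != 0 by apply/negP => /eqP; lra.
    have ac1 : a ^+ c != 0 by apply/negP => /eqP h; move: ac0; rewrite h ltxx.
    have bk1 : (1 + b) ^+ (n %/ M) != 0 by apply/negP => /eqP h; move: bk0; rewrite h ltxx.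
    have gn1 : g ^+ n != 0 by apply/negP => /eqP h; move: gn0; rewrite h ltxx.
    have e1 : P' * (a ^+ c * (1 + b) ^+ (n %/ M))^-1 =
        ((1 + b) * P') * (a ^+ c * (1 + b) ^+ (n %/ M).+1)^-1.
      by rewrite exprS; field; rewrite ?ac1 ?bk1 ?b10.
    have e2 : (1 + b) / a ^+ c * (n.+1)%:R * (s / g) ^+ n =
        ((1 + b) * P') * (a ^+ c * g ^+ n)^-1.
      by rewrite expr_div_n /P'; field; rewrite ?ac1 ?gn1.
    rewrite e1 e2; apply: ler_wpM2l.
      by apply: mulr_ge0 => //; lra.
    rewrite lef_pV2 ?posrE; first by apply: ler_wpM2l; [exact: ltW | exact: hg].
      by apply: mulr_gt0 => //; apply: exprn_gt0; lra.
    exact: mulr_gt0.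
  have sg0 : 0 <= s / g by apply: divr_ge0.
  have C0 : 0 <= (1 + b) / a ^+ c.
    by apply: divr_ge0; [lra | apply: exprn_ge0; exact: ltW].
  rewrite rhoFE; apply: le_trans (root_limsup_le _ sg0 C0 Abound) _.
    by move=> n; have [_ []] := hA n.
  rewrite -EFinD lee_fin.
  have gi0 : 0 <= g^-1 by rewrite invr_ge0.
  apply: le_trans (ler_wpM2r gi0 sr) _.
  have g1' : g != 0 by apply/negP => /eqP h; move: g1; rewrite h; lra.
  by rewrite /r le_eqVlt; apply/orP; left; apply/eqP; field.

apply: (@le_lt_trans _ _ (rr / g)%:E).
  by apply: ge_ereal_sup => _ [[x y] _ <-]; exact: key.
rewrite rhoF lte_fin ltr_pdivrMr; last by lra.
have : 0 < rr by apply: lt_le_trans a_rr.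
nra.
Qed.
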